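(* For every $m\ge1$ there is a market with $m$ items and $m+1$ unit-demand buyers whose minimum Walrasian revenue is $m$, and for which there exist a selling order of the items and a subgame perfect equilibrium of the sequential first-price auction with revenue $1$.
   Context: Unit demand: buyer $i$ has values $v_{i,j}\ge0$ and $v_i(S)=\max_{j\in S}v_{i,j}$, $v_i(\emptyset)=0$; utility is quasi-linear. A Walrasian equilibrium is a price vector $p\ge0$ and an allocation of every item to a buyer such that each buyer's bundle maximizes $v_i(T)-\sum_{j\in T}p_j$ over all bundles $T$; a minimum Walrasian equilibrium has prices coordinatewise at most those of every Walrasian equilibrium, and the minimum Walrasian revenue is the sum of its prices. In a sequential first-price auction the items are sold one at a time in the given order, each by a sealed-bid first-price auction without reserve price (highest bidder wins, ties broken by a seller-chosen rule, winner pays his bid). Full information. A subgame perfect equilibrium is a (pure) strategy profile that is a Nash equilibrium in every subgame; its revenue is the total payment on the equilibrium path. *)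

(* Defs.v *)
From HB Require Import structures.
From mathcomp Require Import all_boot all_order all_algebra all_fingroup.
From mathcomp Require Import reals.
Set Implicit Arguments. Unset Strict Implicit. Unset Printing Implicit Defensive.
Import Order.TTheory GRing.Theory Num.Theory.
Local Open Scope ring_scope.

Section Market.
Variables (R : realType) (n m : nat).
(* buyers are 'I_n, items are 'I_m; v i j = value of buyer i for item j *)
Variable v : 'I_n -> 'I_m -> R.

Definition ud_val (i : 'I_n) (S : {set 'I_m}) : R :=
  if S == set0 then 0 else \big[Num.max/0]_(j in S) v i j.

Definition walrasian (p : 'I_m -> R) (alloc : 'I_m -> 'I_n) : Prop :=
  (forall j, 0 <= p j) /\
  forall i : 'I_n, forall T : {set 'I_m},
    ud_val i T - \sum_(j in T) p j <=
    ud_val i [set j | alloc j == i] - \sum_(j in [set j | alloc j == i]) p j.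

Definition min_walrasian_prices (p : 'I_m -> R) : Prop :=
  (exists alloc, walrasian p alloc) /\
  forall p' alloc', walrasian p' alloc' -> forall j, p j <= p' j.

(* a bid profile of one stage; a history is the sequence of bid profiles of
   the stages already played (full information: all bids are observed) *)
Definition profile := 'I_n -> R.
Definition history := seq profile.
Definition strategy := history -> R.   (* bid at the stage size h, given h *)

Definition prof0 : profile := fun _ => 0.

Definition tiebreak := history -> profile -> 'I_n.
Definition valid_tiebreak (tb : tiebreak) : Prop :=
  forall h b i, b i <= b (tb h b).

Definition valid_strategy (d : strategy) : Prop := forall h, 0 <= d h.
Definition valid_history (h : history) : Prop :=
  forall k, (k < size h)%N -> forall i, 0 <= nth prof0 h k i.

Variables (sigma : {perm 'I_m}) (tb : tiebreak).

(* at stage k, item sigma k is sold *)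
Definition winner (H : history) (k : 'I_m) : 'I_n :=
  tb (take k H) (nth prof0 H k).
Definition price (H : history) (k : 'I_m) : R :=
  nth prof0 H k (winner H k).

Definition won (H : history) (i : 'I_n) : {set 'I_m} :=
  [set j | [exists k : 'I_m, (sigma k == j) && (winner H k == i)]].

Definition utility (H : history) (i : 'I_n) : R :=
  ud_val i (won H i) - \sum_(k < m | winner H k == i) price H k.

Fixpoint extend (s : 'I_n -> strategy) (r : nat) (h : history) : history :=
  match r with
  | 0 => h
  | r'.+1 => extend s r' (rcons h (fun i => s i h))
  end.

Definition play (s : 'I_n -> strategy) (h : history) : history :=
  extend s (m - size h) h.

Definition upd (s : 'I_n -> strategy) (i : 'I_n) (d : strategy) :
  'I_n -> strategy := fun j => if j == i then d else s j.

Definition SPE (s : 'I_n -> strategy) : Prop :=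
  (forall i, valid_strategy (s i)) /\
  forall h : history, valid_history h -> (size h < m)%N ->
  forall (i : 'I_n) (d : strategy), valid_strategy d ->
    utility (play (upd s i d) h) i <= utility (play s h) i.

Definition revenue (s : 'I_n -> strategy) : R :=
  \sum_(k < m) price (play s [::]) k.

End Market.

(* Main.v *)
Require Import Defs.
From HB Require Import structures.
From mathcomp Require Import all_boot all_order all_algebra all_fingroup.
From mathcomp Require Import reals.
From mathcomp Require Import lra.
Import Order.TTheory GRing.Theory Num.Theory.
Local Open Scope ring_scope.
Set Implicit Arguments. Unset Strict Implicit. Unset Printing Implicit Defensive.
Section Ext.
Variables (R : realType) (n : nat).

Lemma size_extend (s : 'I_n -> strategy R n) r h :
  size (extend s r h) = (size h + r)%N.
Proof. elim: r h => [|r IH] h /=; first by rewrite addn0. by rewrite IH size_rcons addSnnS. Qed.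

Lemma take_extend (s : 'I_n -> strategy R n) r h k :
  (k <= size h)%N -> take k (extend s r h) = take k h.
Proof.
elim: r h => [|r IH] h hk //=.
rewrite IH ?size_rcons ?(leq_trans hk) //.
by rewrite -cats1 takel_cat.
Qed.

Lemma nth_extend_old (s : 'I_n -> strategy R n) r h k :
  (k < size h)%N -> nth (@prof0 R n) (extend s r h) k = nth (@prof0 R n) h k.
Proof.
move=> hk.
by rewrite -(nth_take _ hk (extend s r h)) (take_extend s r (leqnn (size h))) take_size.
Qed.

Lemma nth_extend_new (s : 'I_n -> strategy R n) r h k :
  (size h <= k < size h + r)%N ->
  nth (@prof0 R n) (extend s r h) k = (fun i => s i (take k (extend s r h))).
Proof.
elim: r h => [|r IH] h /andP[h1 h2]; first by rewrite addn0 in h2; rewrite leqNgt h2 in h1.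
rewrite /=; case: (ltngtP (size h) k) h1 => // [hk|hk] _.
- rewrite IH // size_rcons hk /=. by rewrite addSnnS.
- rewrite -hk nth_extend_old ?size_rcons // nth_rcons ltnn eqxx.
  rewrite take_extend ?size_rcons //.
  idtac.
  by rewrite -cats1 take_size_cat.
Qed.
End Ext.

Section Main.
Variables (R : realType) (m : nat).
Hypothesis m_gt0 : (0 < m)%N.

Notation hist := (history R m.+1).
Notation p0 := (@prof0 R m.+1).

Definition val0 (i : 'I_m.+1) (j : 'I_m) : R :=
  if (i == ord_max) || (val i == val j) then 1 else 0.

Lemma val0_ge0 i j : 0 <= val0 i j.
Proof. by rewrite /val0; case: ifP. Qed.
Lemma val0_le1 i j : val0 i j <= 1.
Proof. by rewrite /val0; case: ifP. Qed.

Lemma U0 i (S : {set 'I_m}) : 0 <= ud_val val0 i S.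
Proof.
rewrite /ud_val; case: ifP => // _.
elim/big_ind: _ => //= [x y hx hy|k _]; last exact: val0_ge0.
by rewrite le_max hx.
Qed.

Lemma U1 i (S : {set 'I_m}) (c : R) : 0 <= c -> (forall k, k \in S -> val0 i k <= c) -> ud_val val0 i S <= c.
Proof. move=> h1 h2; rewrite /ud_val; case: ifP => // _. exact: bigmax_le. Qed.

Lemma U2 i (S : {set 'I_m}) k : k \in S -> val0 i k <= ud_val val0 i S.
Proof.
move=> h; rewrite /ud_val; case: ifP => [/eqP HS|_]; first by rewrite HS inE in h.
exact: le_bigmax_cond.
Qed.

Definition amax (b : profile R m.+1) : 'I_m.+1 := [arg max_(i > ord0) b i]%O.
Lemma amaxP b i : b i <= b (amax b).
Proof. rewrite /amax. case: arg_maxP => //= j _ H. exact: H. Qed.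

Definition ismax (b : profile R m.+1) (i : 'I_m.+1) := [forall i', b i' <= b i].

Definition tbx : tiebreak R m.+1 := fun h b =>
  if ismax b ord_max && (0 < b ord_max) then ord_max
  else if ismax b (inord (size h)) then inord (size h) else amax b.

Lemma tbx_valid : valid_tiebreak tbx.
Proof.
move=> h b i; rewrite /tbx.
case: ifP => [/andP[/forallP H _]|_]; first exact: H.
case: ifP => [/forallP H|_]; first exact: H.
exact: amaxP.
Qed.

Definition Wn (H : hist) (t : nat) : 'I_m.+1 := tbx (take t H) (nth p0 H t).
Definition Ah (h : hist) : bool := has (fun t => Wn h t == ord_max) (iota 0 (size h)).

Definition sx : 'I_m.+1 -> strategy R m.+1 := fun i h =>
  if Ah h then 0 else if (i == ord_max) || (i == inord (size h)) then 1 else 0.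

Lemma sx_valid i : valid_strategy (sx i).
Proof. by move=> h; rewrite /sx; case: ifP => //; case: ifP. Qed.

Lemma Wn_take H k t : (t < k)%N -> Wn (take k H) t = Wn H t.
Proof. by move=> h; rewrite /Wn take_takel ?(ltnW h) // nth_take. Qed.

Lemma Ah_take H k : (k <= size H)%N ->
  Ah (take k H) = has (fun t => Wn H t == ord_max) (iota 0 k).
Proof.
move=> hk; rewrite /Ah size_takel //.
apply: eq_in_has => t; rewrite mem_iota add0n => /andP[_ ht].
by rewrite Wn_take.
Qed.

Lemma inord_neq_max t : (t < m)%N -> (inord t : 'I_m.+1) != ord_max.
Proof. move=> ht; rewrite -(inj_eq val_inj) /= inordK; last exact: (ltn_trans ht). by rewrite ltn_eqF. Qed.

Section Play.
Variables (h : hist) (i : 'I_m.+1) (s : 'I_m.+1 -> strategy R m.+1).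
Hypothesis hsz : (size h < m)%N.
Hypothesis hs : forall j, j != i -> s j = sx j.
Hypothesis hsv : forall j, valid_strategy (s j).

Let k0 := size h.
Let H := play m s h.

Lemma size_H : size H = m.
Proof. rewrite /H /play size_extend subnKC //. exact: ltnW. Qed.

Lemma take_H : take k0 H = h.
Proof. by rewrite /H /play take_extend // take_size. Qed.

Lemma nth_H_old t : (t < k0)%N -> nth p0 H t = nth p0 h t.
Proof. exact: nth_extend_old. Qed.

Lemma nth_H_new k : (k0 <= k < m)%N -> nth p0 H k = (fun j => s j (take k H)).
Proof. move=> hk; rewrite /H /play; apply: nth_extend_new; rewrite subnKC //; exact: ltnW. Qed.

Lemma Wn_H_old t : (t < k0)%N -> Wn H t = Wn h t.
Proof. by move=> ht; rewrite -(Wn_take H ht) take_H. Qed.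

Lemma Ah_h : Ah h = has (fun t => Wn H t == ord_max) (iota 0 k0).
Proof. by rewrite -Ah_take ?take_H // size_H ltnW. Qed.

Lemma bid_ge0 k j : (k0 <= k < m)%N -> 0 <= nth p0 H k j.
Proof. by move=> hk; rewrite nth_H_new //; apply: hsv. Qed.

End Play.

Lemma winnerE (H : hist) (k : 'I_m) : winner tbx H k = Wn H k.
Proof. by []. Qed.

Lemma priceE (H : hist) (k : 'I_m) : price tbx H k = nth p0 H k (Wn H k).
Proof. by []. Qed.

Lemma wonE (H : hist) i (j : 'I_m) : (j \in won 1 tbx H i) = (Wn H j == i).
Proof.
rewrite inE; apply/existsP/idP => [[k /andP[/eqP hk hw]]|hw].
  by rewrite -hk perm1 -winnerE.
by exists j; rewrite perm1 eqxx.
Qed.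

Definition past k0 (H : hist) i := \sum_(k < m | (k < k0)%N && (Wn H k == i)) nth p0 H k i.
Definition fut k0 (H : hist) i := \sum_(k < m | (k0 <= k)%N && (Wn H k == i)) nth p0 H k i.

Lemma utilityE k0 (H : hist) i :
  utility val0 1 tbx H i = ud_val val0 i (won 1 tbx H i) - (past k0 H i + fut k0 H i).
Proof.
rewrite /utility (bigID (fun k : 'I_m => (k < k0)%N)) /=; congr (_ - (_ + _)).
  apply: eq_big => k; first by rewrite andbC.
  by move=> /andP[/eqP hw _]; rewrite priceE -winnerE hw.
apply: eq_big => k; first by rewrite andbC -leqNgt.
by move=> /andP[/eqP hw _]; rewrite priceE -winnerE hw.
Qed.

Lemma fut_ge0 k0 (H : hist) i : (forall k j, (k0 <= k < m)%N -> 0 <= nth p0 H k j) ->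
  0 <= fut k0 H i.
Proof. move=> hb; apply: sumr_ge0 => k /andP[hk _]; apply: hb; by rewrite hk ltn_ord. Qed.

Lemma fut_ge k0 (H : hist) i (t : 'I_m) : (forall k j, (k0 <= k < m)%N -> 0 <= nth p0 H k j) ->
  (k0 <= t)%N -> Wn H t = i -> nth p0 H t i <= fut k0 H i.
Proof.
move=> hb ht hw; rewrite /fut (bigD1 t) /=; last by rewrite ht hw eqxx.
rewrite lerDl; apply: sumr_ge0 => k /andP[/andP[hk _] _]; apply: hb; by rewrite hk ltn_ord.
Qed.


Lemma EQ1 (h : hist) : (size h < m)%N -> ~~ Ah h ->
  Wn (play m sx h) (size h) = ord_max /\ nth p0 (play m sx h) (size h) ord_max = 1.
Proof.
move=> hsz hA.
have hn := nth_H_new sx hsz (k:=size h) (ltac:(by rewrite leqnn hsz)).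
rewrite /Wn hn take_H /sx (negbTE hA) eqxx /=; split=> //.
rewrite /tbx eqxx /= ltr01 andbT.
have -> : ismax (fun j => if (j == ord_max) || (j == inord (size h)) then 1 else 0) ord_max.
  by apply/forallP => j /=; rewrite eqxx /=; case: ifP.
by [].
Qed.

Lemma EQ2 (h : hist) (k : nat) : (size h < m)%N -> (size h <= k < m)%N -> Ah h || (size h < k)%N ->
  Wn (play m sx h) k = inord k /\ nth p0 (play m sx h) k (inord k) = 0.
Proof.
move=> hsz /andP[hk1 hk2] hor.
set H2 := play m sx h.
have hA : Ah (take k H2).
  rewrite Ah_take ?size_H ?(ltnW hk2) //.
  case hAh: (Ah h).
    rewrite (Ah_h sx hsz) in hAh; case/hasP: hAh => t; rewrite mem_iota => /andP[_ ht] hw.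
    apply/hasP; exists t => //; rewrite mem_iota /= add0n.
    exact: (leq_trans ht hk1).
  rewrite hAh /= in hor.
  have [hw _] := EQ1 hsz (negbT hAh).
  by apply/hasP; exists (size h); rewrite ?mem_iota /= ?add0n ?hor // hw.
rewrite /Wn nth_H_new ?hk1 ?hk2 // /sx hA; split=> //.
rewrite /tbx ltxx andbF size_takel ?size_H ?(ltnW hk2) //.
have -> : ismax (fun _ => 0) (inord k) by apply/forallP.
by [].
Qed.

Lemma FUT2_0 (h : hist) i : (size h < m)%N -> (i != ord_max) || Ah h ->
  fut (size h) (play m sx h) i = 0.
Proof.
move=> hsz hi; apply: big1 => k /andP[hk /eqP hw].
case hc: (Ah h || (size h < k)%N).
  have [hw2 hp] := EQ2 (k:=k) hsz (ltac:(by rewrite hk ltn_ord)) hc.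
  by rewrite -hw hw2 hp.
move/negbT: hc; rewrite negb_or -leqNgt => /andP[hA hk'].
have hke : size h = k by apply/eqP; rewrite eqn_leq hk hk'.
have [hw2 _] := EQ1 hsz hA.
by move: hi; rewrite (negbTE hA) orbF -hw -hke hw2 eqxx.
Qed.

Lemma FUT2_a (h : hist) : (size h < m)%N -> ~~ Ah h ->
  fut (size h) (play m sx h) ord_max = 1.
Proof.
move=> hsz hA; have [hw hp] := EQ1 hsz hA.
rewrite /fut (bigD1 (Ordinal hsz)) /=; last by rewrite leqnn hw eqxx.
rewrite hp big1 ?addr0 // => k /andP[/andP[hk /eqP hw2] hne].
have hlt : (size h < k)%N.
  by rewrite ltn_neqAle hk andbT; apply: contraNneq hne => e; apply/eqP/val_inj.
have [hw3 hp3] := EQ2 (k:=k) hsz (ltac:(by rewrite hk ltn_ord)) (ltac:(by rewrite hlt orbT)).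
by rewrite -hw2 hw3 hp3.
Qed.

Lemma val0_max k : val0 ord_max k = 1.
Proof. by rewrite /val0 eqxx. Qed.

Lemma val0_lift (j k : 'I_m) : val0 (lift ord_max j) k = if j == k then 1 else 0.
Proof.
rewrite /val0 eq_sym (negbTE (neq_lift _ _)) /= /bump leqNgt ltn_ord add0n.
by [].
Qed.

Lemma UBb (j : 'I_m) (S : {set 'I_m}) : ud_val val0 (lift ord_max j) S <= (j \in S)%:R.
Proof.
case hj: (j \in S); first by apply: U1 => // k _; exact: val0_le1.
apply: U1 => // k hk; rewrite val0_lift; case: eqP => // e.
by rewrite e hk in hj.
Qed.

Lemma LBb (j : 'I_m) (S : {set 'I_m}) : (j \in S)%:R <= ud_val val0 (lift ord_max j) S.
Proof.
case hj: (j \in S); last exact: U0.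
by have := U2 (lift ord_max j) hj; rewrite val0_lift eqxx.
Qed.

Lemma ud_le1 i (S : {set 'I_m}) : ud_val val0 i S <= 1.
Proof. by apply: U1 => // k _; exact: val0_le1. Qed.

Lemma SPE_core (h : hist) (i : 'I_m.+1) (d : strategy R m.+1) : (size h < m)%N ->
  valid_strategy d ->
  utility val0 1 tbx (play m (upd sx i d) h) i <= utility val0 1 tbx (play m sx h) i.
Proof.
move=> hsz hd.
set s1 := upd sx i d.
have hsv1 : forall j, valid_strategy (s1 j).
  by move=> j; rewrite /s1 /upd; case: ifP => _ //; exact: sx_valid.
have hs1 : forall j, j != i -> s1 j = sx j by move=> j hj; rewrite /s1 /upd (negbTE hj).
set H1 := play m s1 h; set H2 := play m sx h.
set k0 := size h.
have hb1 : forall k j, (k0 <= k < m)%N -> 0 <= nth p0 H1 k j := fun k j => bid_ge0 hsz hsv1 j.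
have hfut1 := fut_ge0 i hb1.
have hpast : past k0 H1 i = past k0 H2 i.
  apply: eq_big => k; first by case hk: (k < k0)%N => //=; rewrite /H1 /H2 !Wn_H_old.
  by move=> /andP[hk _]; rewrite /H1 /H2 !nth_H_old.
rewrite !(utilityE k0) hpast.
suff : ud_val val0 i (won 1 tbx H1 i) - fut k0 H1 i <= ud_val val0 i (won 1 tbx H2 i) - fut k0 H2 i.
  by move=> hh; lra.
have hW : forall t, (t < k0)%N -> Wn H1 t = Wn H2 t.
  by move=> t ht; rewrite /H1 /H2 !Wn_H_old.
have hAh1 : Ah h = has (fun t => Wn H1 t == ord_max) (iota 0 k0) := Ah_h s1 hsz.
have hAh2 : Ah h = has (fun t => Wn H2 t == ord_max) (iota 0 k0) := Ah_h sx hsz.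
have hud1 := ud_le1 i (won 1 tbx H1 i).
case: (unliftP ord_max i) => [j ei|ei].
  subst i.
  have hne : lift ord_max j != ord_max by rewrite eq_sym neq_lift.
  rewrite FUT2_0 ?hne //.
  have hub := UBb j (won 1 tbx H1 (lift ord_max j)).
  have hlb := LBb j (won 1 tbx H2 (lift ord_max j)).
  case: (ltnP j k0) => hjk.
    have e : (j \in won 1 tbx H1 (lift ord_max j)) = (j \in won 1 tbx H2 (lift ord_max j)).
      by rewrite !wonE hW.
    rewrite e in hub; lra.
  case hc: (Ah h || (k0 < j)%N).
    have [hw2 _] := EQ2 (k:=j) hsz (ltac:(by rewrite hjk ltn_ord)) hc.
    have hin : j \in won 1 tbx H2 (lift ord_max j).
      rewrite wonE hw2; apply/eqP/val_inj; rewrite /= inordK ?lift_max //.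
      by rewrite /bump leqNgt ltn_ord.
      exact: (ltn_trans (ltn_ord j)).
    rewrite hin /= mulr1n in hlb; lra.
  move/negbT: hc; rewrite negb_or -leqNgt => /andP[hA hjk'].
  have ej : (j : nat) = k0 by apply/eqP; rewrite eqn_leq hjk' hjk.
  have hud2 := U0 (lift ord_max j) (won 1 tbx H2 (lift ord_max j)).
  suff : ud_val val0 (lift ord_max j) (won 1 tbx H1 (lift ord_max j)) <= fut k0 H1 (lift ord_max j).
    by move=> hh; lra.
  case hw: (Wn H1 j == lift ord_max j); last by rewrite wonE hw /= mulr0n in hub; lra.
  have hn := nth_H_new s1 hsz (k:=k0) (ltac:(by rewrite leqnn hsz)).
  rewrite take_H in hn.
  set b := nth p0 H1 k0 in hn.
  have hbo : b ord_max = 1 by rewrite hn /= hs1 1?eq_sym // /sx (negbTE hA) eqxx.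
  have hwk : tbx h b = lift ord_max j.
    by move: hw; rewrite /Wn ej take_H => /eqP.
  have [i' hi'] : exists i', b ord_max < b i'.
    move: hwk; rewrite /tbx hbo ltr01 andbT; case: ifP => hmx.
      by move=> e; move: hne; rewrite -e eqxx.
    move=> _; move/negbT: hmx; rewrite /ismax => /forallPn [i' hh]; exists i'.
    by rewrite ltNge -hbo.
  have hval : b i' <= b (tbx h b) := tbx_valid _ _ _.
  rewrite hwk in hval.
  have hfg := fut_ge (t:=j) hb1 hjk (eqP hw).
  rewrite ej -/b in hfg.
  lra.
subst i.
case hA: (Ah h).
  rewrite FUT2_0 ?hA ?orbT //.
  move: hA; rewrite hAh2 => /hasP[t]; rewrite mem_iota add0n => /andP[_ ht] hw.
  have htm : (t < m)%N := ltn_trans ht hsz.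
  have := U2 ord_max (k:=Ordinal htm) (S:=won 1 tbx H2 ord_max); rewrite wonE /= hw val0_max => /(_ isT).
  move=> hh; lra.
rewrite FUT2_a ?hA //.
have [hw2 _] := EQ1 hsz (negbT hA).
have := U2 ord_max (k:=Ordinal hsz) (S:=won 1 tbx H2 ord_max); rewrite wonE /= hw2 eqxx val0_max => /(_ isT).
move=> hud2.
suff : ud_val val0 ord_max (won 1 tbx H1 ord_max) - fut k0 H1 ord_max <= 0 by move=> hh; lra.
case: (boolP [exists t : 'I_m, (k0 <= t)%N && (Wn H1 t == ord_max)]) => [hex|hnex].
  have hexn : exists t, (k0 <= t < m)%N && (Wn H1 t == ord_max).
    by case/existsP: hex => t /andP[h1 h2]; exists t; rewrite h1 ltn_ord h2.
  case: (ex_minnP hexn) => t0 /andP[/andP[ht1 ht2] hw] hmin.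
  have hAt : ~~ Ah (take t0 H1).
    rewrite Ah_take ?size_H ?(ltnW ht2) //; apply/hasPn => t; rewrite mem_iota add0n => /andP[_ ht].
    case: (ltnP t k0) => htk.
      by move: hA; rewrite hAh1 => /negbT/hasPn/(_ t); rewrite mem_iota add0n htk => /(_ isT).
    apply/negP => hwt; have := hmin t; rewrite htk (ltn_trans ht ht2) hwt => /(_ isT).
    by rewrite leqNgt ht.
  have hbid : nth p0 H1 t0 (inord t0) = 1.
    rewrite nth_H_new ?ht1 ?ht2 // hs1 ?inord_neq_max // /sx (negbTE hAt).
    by rewrite size_takel ?size_H ?(ltnW ht2) // eqxx orbT.
  have hval : nth p0 H1 t0 (inord t0) <= nth p0 H1 t0 (Wn H1 t0) := tbx_valid _ _ _.
  rewrite (eqP hw) hbid in hval.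
  have hfg := fut_ge (t:=Ordinal ht2) hb1 ht1 (eqP hw).
  move: hfg => /= hfg; lra.
have -> : won 1 tbx H1 ord_max = set0 :> {set 'I_m}.
  apply/setP => t; rewrite wonE inE; apply/negbTE; case: (ltnP t k0) => htk.
    by move: hA; rewrite hAh1 => /negbT/hasPn/(_ t); rewrite mem_iota add0n htk => /(_ isT).
  by apply: contra hnex => hw; apply/existsP; exists t; rewrite htk hw.
rewrite /ud_val eqxx; lra.
Qed.

Definition alloc0 (j : 'I_m) : 'I_m.+1 := lift ord_max j.

Lemma ud_card i (S : {set 'I_m}) : ud_val val0 i S <= #|S|%:R.
Proof.
case: (boolP (S == set0)) => hS; first by rewrite /ud_val hS.
apply: (le_trans (ud_le1 i S)); rewrite ler1n card_gt0; exact: hS.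
Qed.

Lemma walras1 : walrasian val0 (fun _ => 1) alloc0.
Proof.
split=> // i T.
have hL : ud_val val0 i T - \sum_(j in T) (1 : R) <= 0.
  rewrite sumr_const; case: (boolP (T == set0)) => hT.
    by rewrite /ud_val hT (eqP hT) cards0 subrr.
  have := ud_le1 i T; have : (1 : R) <= 1 *+ #|T| by rewrite ler1n card_gt0.
  move=> h1 h2; lra.
apply: (le_trans hL).
case: (unliftP ord_max i) => [j ->|->].
  have -> : [set k | alloc0 k == lift ord_max j] = [set j].
    by apply/setP => k; rewrite !inE /alloc0 (inj_eq (@lift_inj _ _)).
  rewrite big_set1 subr_ge0.
  by have := U2 (lift ord_max j) (set11 j); rewrite val0_lift eqxx.
have -> : [set k | alloc0 k == ord_max] = set0.
  by apply/setP => k; rewrite !inE /alloc0 eq_sym (negbTE (neq_lift _ _)).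
by rewrite big_set0 /ud_val eqxx subrr.
Qed.

Lemma walras_min p' al' : walrasian val0 p' al' -> forall j, 1 <= p' j.
Proof.
move=> [hp hW] j0.
pose B i := [set j | al' j == i].
pose U i := ud_val val0 i (B i) - \sum_(j in B i) p' j.
have hU : forall i T, ud_val val0 i T - \sum_(j in T) p' j <= U i by move=> i T; exact: hW.
have hsumP : \sum_i \sum_(j in B i) p' j = \sum_j p' j.
  rewrite (partition_big al' xpredT) //=; apply: eq_bigr => i _.
  by apply: eq_bigl => j; rewrite inE.
have hsumC : \sum_i (#|B i|%:R : R) = m%:R.
  have : \sum_(j : 'I_m) (1 : R) = m%:R by rewrite sumr_const card_ord.
  move=> <-; rewrite (partition_big al' xpredT) //=; apply: eq_bigr => i _.
  rewrite sumr_const; congr (_ *+ _); apply: eq_card => j; by rewrite inE.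
have hup : \sum_i U i <= m%:R - \sum_j p' j.
  rewrite /U sumrB hsumP -hsumC lerD2r; apply: ler_sum => i _; exact: ud_card.
have hlow : forall i (k : 'I_m), val0 i k = 1 -> 1 - p' k <= U i.
  move=> i k hv; apply: le_trans (hU i [set k]).
  by rewrite big_set1 lerD2r; have := U2 i (set11 k); rewrite hv.
have hlow2 : \sum_(k < m) (1 - p' k) + (1 - p' j0) <= \sum_i U i.
  rewrite big_ord_recr /=; apply: lerD.
    apply: ler_sum => k _; apply: hlow; by rewrite /val0 eqxx orbT.
  by apply: hlow; rewrite val0_max.
move: hlow2; rewrite sumrB sumr_const card_ord => hl.
lra.
Qed.

Lemma revenue_sx : revenue m tbx sx = 1.
Proof.
have hsz : (size ([::] : hist) < m)%N by [].
have hA : ~~ Ah [::] by [].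
have [hw hp] := EQ1 hsz hA.
rewrite /revenue (bigD1 (Ordinal m_gt0)) //= priceE /= hw hp big1 ?addr0 // => k hk.
have hlt : (0 < k)%N.
  by rewrite lt0n; apply: contraNneq hk => e; apply/eqP/val_inj.
have [hw2 hp2] := EQ2 (k:=k) hsz (ltac:(by rewrite ltn_ord)) (ltac:(by rewrite hlt orbT)).
by rewrite priceE hw2 hp2.
Qed.

Lemma main_sec :
  exists v : 'I_m.+1 -> 'I_m -> R,
    (forall i j, 0 <= v i j) /\
    (exists p : 'I_m -> R,
        min_walrasian_prices v p /\ \sum_(j < m) p j = m%:R) /\
    (exists (sigma : {perm 'I_m}) (tb : tiebreak R m.+1)
            (s : 'I_m.+1 -> strategy R m.+1),
        valid_tiebreak tb /\ SPE v sigma tb s /\ revenue m tb s = 1).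
Proof.
exists val0; split; first exact: val0_ge0.
split.
  exists (fun _ => 1); split; last by rewrite (eq_bigr (fun _ => 1)) // sumr_const card_ord.
  split; first by exists alloc0; exact: walras1.
  move=> p' al' hw j; exact: walras_min hw j.
exists 1%g, tbx, sx; split; first exact: tbx_valid.
split; last exact: revenue_sx.
split; first exact: sx_valid.
move=> h _ hsz i d hd; exact: SPE_core.
Qed.
End Main.

Theorem mainTheorem13 (R : realType) (m : nat) : (1 <= m)%N ->
  exists v : 'I_m.+1 -> 'I_m -> R,
    (forall i j, 0 <= v i j) /\
    (exists p : 'I_m -> R,
        min_walrasian_prices v p /\ \sum_(j < m) p j = m%:R) /\
    (exists (sigma : {perm 'I_m}) (tb : tiebreak R m.+1)
            (s : 'I_m.+1 -> strategy R m.+1),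
        valid_tiebreak tb /\ SPE v sigma tb s /\ revenue m tb s = 1).
Proof. move=> hm; exact: main_sec. Qed.
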